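(* Let $R$ be a right semihereditary ring such that $M_n(R)$ is a Baer ring for every $n\ge1$, let $M$ be a finitely generated right $R$-module and $K$ a submodule of $M$. (1) $M/\mathrm{cl}_{\mathbf B}(K)$ is finitely generated projective and $\mathrm{cl}_{\mathbf B}(K)$ is a direct summand of $M$. In particular $M=\mathbf B M\oplus \mathbf U M$, where $\mathbf BM$ is the bounded torsion submodule of $M$ and $\mathbf UM\cong M/\mathbf BM$ is finitely generated projective. (2) If moreover $R$ is right strongly semihereditary, then $\mathrm{cl}_{\mathbf T}(K)=\mathrm{cl}_{\mathbf B}(K)$ is a direct summand of $M$, and the torsion theories $(\mathbf B,\mathbf U)$ and $(\mathbf T,\mathbf P)$ coincide on the class of finitely generated modules. In particular every finitely generated right $R$-module is the direct sum of a finitely generated projective module and a singular module.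
   Context: $(\mathbf B,\mathbf U)$ is the torsion theory whose torsion class $\mathbf B$ consists of the right modules $M$ with $\mathrm{Hom}_R(M,R)=0$ (bounded modules); $\mathbf BM$ is the largest bounded submodule of $M$ and $\mathbf UM=M/\mathbf BM$. For a torsion theory with torsion class $\mathcal T$, $\mathrm{cl}_{\mathcal T}^M(K)=\pi^{-1}(\mathcal T(M/K))$ where $\pi:M\to M/K$. $(\mathbf T,\mathbf P)$ is the Goldie torsion theory (torsion-free class = nonsingular modules; for right nonsingular $R$ the torsion modules are the singular ones). A ring is Baer if every right annihilator is generated by an idempotent. $R$ is right strongly semihereditary if $R$ is right nonsingular and every finitely generated nonsingular right $R$-module is projective. *)

(* Defs.v *)
(* Right R-modules are modelled as left modules over the
   converse ring R^c (so  a *: m  stands for the right action  m . a). *)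
From HB Require Import structures.
From mathcomp Require Import all_boot all_order all_algebra.
Set Implicit Arguments. Unset Strict Implicit. Unset Printing Implicit Defensive.
Import GRing.Theory.
Local Open Scope ring_scope.

Section RightModules.
Variable R : nzRingType.

(* the regular right module R_R *)
Definition RR : lmodType R^c := (R^c)^o.

Definition linear_on (M N : lmodType R^c) (X : M -> Prop) (f : M -> N) : Prop :=
  (forall x y, X x -> X y -> f (x + y) = f x + f y) /\
  (forall (a : R^c) x, X x -> f (a *: x) = a *: f x).

Definition full_sub (M : lmodType R^c) : M -> Prop := fun _ => True.

Section InModule.
Variable M : lmodType R^c.

Definition submod (X : M -> Prop) : Prop :=
  [/\ X 0, (forall x y, X x -> X y -> X (x + y)) &
      (forall (a : R^c) x, X x -> X (a *: x))].

Definition zero_sub : M -> Prop := fun x => x = 0.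
Definition incl (X Y : M -> Prop) : Prop := forall x, X x -> Y x.


(* f restricted to X induces a homomorphism X/K -> N  (for K <= X) *)
Definition hom_sq (N : lmodType R^c) (K X : M -> Prop) (f : M -> N) : Prop :=
  linear_on X f /\ (forall k, K k -> f k = 0).

Definition bounded_sq (K X : M -> Prop) : Prop :=
  forall f : M -> RR, hom_sq K X f -> forall x, X x -> f x = 0.

Definition fg_sq (K X : M -> Prop) : Prop :=
  exists n (v : 'I_n -> M), (forall i, X (v i)) /\
    forall x, X x -> exists c : 'I_n -> R^c, K (x - \sum_(i < n) c i *: v i).

Definition proj_sq (K X : M -> Prop) : Prop :=
  forall (A B : lmodType R^c) (g : A -> B),
    linear_on (@full_sub A) g -> (forall b, exists a, g a = b) ->
    forall f : M -> B, hom_sq K X f ->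
    exists h : M -> A, hom_sq K X h /\ forall x, X x -> g (h x) = f x.

(* cl_B^M(K) = pi^-1 (B(M/K)); B(M/K) is the largest bounded submodule of M/K,
   i.e. the union (= sum) of all bounded submodules X/K, K <= X <= M. *)
Definition Bcl (K : M -> Prop) : M -> Prop := fun x =>
  exists X, [/\ submod X, incl K X, X x & bounded_sq K X].

Definition dsum (X Y : M -> Prop) : Prop :=
  [/\ submod X, submod Y, (forall x, X x -> Y x -> x = 0) &
      (forall m, exists x y, [/\ X x, Y y & m = x + y])].

Definition summand (X : M -> Prop) : Prop := exists Y, dsum X Y.

End InModule.

Definition essential_rideal (I : RR -> Prop) : Prop :=
  submod I /\
  forall J : RR -> Prop, submod J -> (exists j, J j /\ j <> 0) ->
    exists z, [/\ I z, J z & z <> 0].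

Section InModule2.
Variable M : lmodType R^c.

(* y + K is a singular element of M/K : y.I <= K for an essential right ideal I *)
Definition sing_rel (K : M -> Prop) (y : M) : Prop :=
  exists I : RR -> Prop, essential_rideal I /\ forall a : RR, I a -> K ((a : R^c) *: y).

(* cl_T^M(K) = pi^-1 (Z_2(M/K)) : x + K lies in the Goldie torsion submodule
   Z_2(M/K), i.e. x.I is singular modulo K for some essential right ideal I *)
Definition Tcl (K : M -> Prop) : M -> Prop := fun x =>
  exists I : RR -> Prop, essential_rideal I /\
    forall a : RR, I a -> sing_rel K ((a : R^c) *: x).

Definition fg_mod : Prop := fg_sq (@zero_sub M) (@full_sub M).
Definition projective_mod : Prop := proj_sq (@zero_sub M) (@full_sub M).
Definition bounded_mod : Prop := bounded_sq (@zero_sub M) (@full_sub M).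
Definition Btorsionfree_mod : Prop := forall x, Bcl (@zero_sub M) x -> x = 0.
Definition Gtorsion_mod : Prop := forall x, Tcl (@zero_sub M) x.
Definition Gtorsionfree_mod : Prop := forall x, Tcl (@zero_sub M) x -> x = 0.
Definition nonsingular_mod : Prop := forall x, sing_rel (@zero_sub M) x -> x = 0.
Definition singular_sub (S : M -> Prop) : Prop :=
  forall x, S x -> sing_rel (@zero_sub M) x.

End InModule2.

Definition right_semihereditary : Prop :=
  forall I : RR -> Prop, submod I -> fg_sq (@zero_sub RR) I ->
    proj_sq (@zero_sub RR) I.

Definition right_nonsingular : Prop := nonsingular_mod RR.

Definition right_strongly_semihereditary : Prop :=
  right_nonsingular /\
  forall N : lmodType R^c, fg_mod N -> nonsingular_mod N -> projective_mod N.

End RightModules.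

Definition baer (A : nzRingType) : Prop :=
  forall S : A -> Prop, exists e : A, e * e = e /\
    forall x : A, (forall s, S s -> s * x = 0) <-> exists y, x = e * y.

(* Main.v *)
Require Import Defs.
From HB Require Import structures.
From mathcomp Require Import all_boot all_order all_algebra.
From Stdlib Require Import ClassicalEpsilon FunctionalExtensionality PropExtensionality.
Set Implicit Arguments. Unset Strict Implicit. Unset Printing Implicit Defensive.
Import GRing.Theory.
Local Open Scope ring_scope.

Definition pb (P : Prop) : bool :=
  if excluded_middle_informative P then true else false.
Lemma pbP (P : Prop) : reflect P (pb P).
Proof. by rewrite /pb; case: excluded_middle_informative => h; constructor. Qed.
Section Gen.
Variable R : nzRingType.

Lemma lin0 (M N : lmodType R^c) (X : M -> Prop) (phi : M -> N) :
  submod X -> linear_on X phi -> phi 0 = 0.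
Proof.
case=> X0 _ _ [_ hz].
by rewrite -(scale0r (0 : M)) hz // scale0r.
Qed.

Lemma lin_sumZ (M N : lmodType R^c) (X : M -> Prop) (phi : M -> N)
  (hX : submod X) (hl : linear_on X phi) (I : Type) (r : seq I)
  (c : I -> R^c) (w : I -> M) :
  (forall i, X (w i)) ->
  X (\sum_(i <- r) c i *: w i) /\
  phi (\sum_(i <- r) c i *: w i) = \sum_(i <- r) c i *: phi (w i).
Proof.
move=> hw; case: (hX) => X0 XD XZ; case: (hl) => hD hZ.
apply: (big_rec2 (fun y1 y2 => X y1 /\ phi y1 = y2)).
  by split => //; apply: lin0 hX hl.
move=> i y1 y2 _ [h1 h2]; split; first by apply: XD => //; apply: XZ.
by rewrite hD ?hZ ?h2 //; apply: XZ.
Qed.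

Lemma full_sub_sub (M : lmodType R^c) : submod (@full_sub R M).
Proof. by []. Qed.

Lemma zero_sub_sub (M : lmodType R^c) : submod (@zero_sub R M).
Proof.
split; rewrite /zero_sub //; first by move=> x y -> ->; rewrite addr0.
by move=> a x ->; rewrite scaler0.
Qed.

End Gen.

Section Ess.
Variable R : nzRingType.
Local Notation RRt := (RR R).

Lemma ess_full : essential_rideal (fun _ : RRt => True).
Proof.
split; first exact: (full_sub_sub RRt).
by move=> J _ [j [Jj nj]]; exists j.
Qed.

Lemma ess_cap (I J : RRt -> Prop) : essential_rideal I -> essential_rideal J ->
  essential_rideal (fun a => I a /\ J a).
Proof.
move=> [[I0 ID IZ] eI] [[J0 JD JZ] eJ]; split.
  split => //; first by move=> x y [? ?] [? ?]; split; [apply: ID | apply: JD].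
  by move=> a x [? ?]; split; [apply: IZ | apply: JZ].
move=> L [L0 LD LZ] hL.
have [z [Iz Lz nz]] := eI L (And3 L0 LD LZ) hL.
have sL' : submod (fun a => I a /\ L a).
  split => //; first by move=> x y [? ?] [? ?]; split; [apply: ID | apply: LD].
  by move=> a x [? ?]; split; [apply: IZ | apply: LZ].
have [w [Jw [Iw Lw] nw]] := eJ _ sL' (ex_intro _ z (conj (conj Iz Lz) nz)).
by exists w.
Qed.

Lemma cyc_sub (M : lmodType R^c) (y : M) : submod (fun z => exists r : R^c, z = r *: y).
Proof.
split; first by exists 0; rewrite scale0r.
  by move=> x1 y1 [r1 ->] [r2 ->]; exists (r1 + r2); rewrite scalerDl.
by move=> a x [r ->]; exists (a * r); rewrite scalerA.
Qed.

Lemma ess_col (I : RRt -> Prop) (c : RRt) : essential_rideal I ->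
  essential_rideal (fun a : RRt => I ((a : R^c) *: c)).
Proof.
move=> [[I0 ID IZ] eI]; split.
  split; first by rewrite scale0r.
    by move=> x y hx hy; rewrite scalerDl; apply: ID.
  by move=> a x hx; rewrite -scalerA; apply: IZ.
move=> L [L0 LD LZ] [j [Lj nj]].
case: (eqVneq ((j : R^c) *: c) 0) => hjc.
  by exists j; rewrite hjc.
have hjc' : (j : R^c) *: c <> 0 by apply/eqP.
have [z [Iz [r hz] nz]] := eI _ (cyc_sub ((j : R^c) *: c))
   (ex_intro _ _ (conj (ex_intro _ 1 (esym (scale1r _))) hjc')).
exists (r *: j); split.
- by rewrite scalerA in hz; rewrite -hz.
- by apply: LZ.
- move=> h; have h' : (r * (j : R^c) : R^c) = 0 := h.
  by apply: nz; rewrite hz scalerA h' scale0r.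
Qed.

Lemma ess_nz (hNS : right_nonsingular R) (I : RRt -> Prop) (c : RRt) :
  essential_rideal I -> c <> 0 -> exists a, I a /\ (a : R^c) *: c <> 0.
Proof.
move=> eI nc.
case: (Classical_Prop.classic (exists a, I a /\ (a : R^c) *: c <> 0)) => // hn.
exfalso; apply: nc; apply: hNS; exists I; split => // a Ia.
rewrite /zero_sub; case: (eqVneq ((a : R^c) *: c) 0) => // hne.
by exfalso; apply: hn; exists a; split => //; apply/eqP.
Qed.

Section Qe.
Variable M : lmodType R^c.

Definition Qe (Q0 : M -> Prop) : M -> Prop := fun y =>
  exists I : RRt -> Prop, essential_rideal I /\ forall a : RRt, I a -> Q0 ((a : R^c) *: y).

Lemma Qe_sub Q0 : submod Q0 -> submod (Qe Q0).
Proof.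
move=> [Q00 QD QZ]; split.
- by exists (fun _ => True); split; [exact: ess_full | move=> a _; rewrite scaler0].
- move=> x y [I1 [e1 h1]] [I2 [e2 h2]]; exists (fun a => I1 a /\ I2 a).
  split; first exact: ess_cap.
  by move=> a [? ?]; rewrite scalerDr; apply: QD; [apply: h1 | apply: h2].
- move=> r x [I [eI h]]; exists (fun a : RRt => I ((a : R^c) *: (r : RRt))).
  split; first exact: ess_col.
  by move=> a Ia; rewrite scalerA; apply: h.
Qed.

Lemma Qe_incl Q0 : submod Q0 -> incl Q0 (Qe Q0).
Proof.
move=> [_ _ QZ] x hx; exists (fun _ => True); split; first exact: ess_full.
by move=> a _; apply: QZ.
Qed.

Lemma Qe_closed (hNS : right_nonsingular R) Q0 (hQ : submod Q0) (I : RRt -> Prop) y :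
  essential_rideal I -> (forall a : RRt, I a -> Qe Q0 ((a : R^c) *: y)) -> Qe Q0 y.
Proof.
move=> [_ eI] h; case: hQ => Q00 QD QZ.
exists (fun c : RRt => Q0 ((c : R^c) *: y)); split => //; split.
  split; first by rewrite scale0r.
    by move=> a b ha hb; rewrite scalerDl; apply: QD.
  by move=> r c hc; rewrite -scalerA; apply: QZ.
move=> L [L0 LD LZ] hL.
have [z [Iz Lz nz]] := eI L (And3 L0 LD LZ) hL.
have [Iz' [eIz hz]] := h z Iz.
have [b [Ib nb]] := ess_nz hNS eIz nz.
exists ((b : R^c) *: z); split => //.
  by rewrite -scalerA; apply: hz.
by apply: LZ.
Qed.

Lemma Qe_kill (hNS : right_nonsingular R) (phi : M -> RRt) Q0 :
  linear_on (@full_sub _ M) phi -> (forall y, Q0 y -> phi y = 0) ->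
  forall y, Qe Q0 y -> phi y = 0.
Proof.
move=> [_ hZ] hk y [I [eI h]]; apply: hNS; exists I; split => // a Ia.
by rewrite /zero_sub -hZ // hk //; apply: h.
Qed.

Lemma Z2_sing (hNS : right_nonsingular R) y : Tcl (@zero_sub _ M) y -> sing_rel (@zero_sub _ M) y.
Proof.
move=> [I [eI h]].
exact: (Qe_closed hNS (zero_sub_sub M) eI h).
Qed.

End Qe.
End Ess.
Lemma pb_iff (P Q : Prop) : (P <-> Q) -> pb P = pb Q.
Proof. by move=> [h1 h2]; apply/pbP/pbP. Qed.

Section Quot.
Variable R : nzRingType.
Variable M : lmodType R^c.
Variable T : M -> Prop.
Hypothesis hT : submod T.

Lemma T0 : T 0. Proof. by case: hT. Qed.
Lemma TD x y : T x -> T y -> T (x + y). Proof. by case: hT => _ h _; apply: h. Qed.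
Lemma TZ a x : T x -> T (a *: x). Proof. by case: hT => _ _ h; apply: h. Qed.
Lemma TN x : T x -> T (- x). Proof. by move=> h; rewrite -scaleN1r; apply: TZ. Qed.
Lemma TB x y : T x -> T y -> T (x - y). Proof. by move=> h1 h2; apply: TD => //; apply: TN. Qed.

Definition cls (m : M) : pred M := fun y => pb (T (y - m)).
Lemma cls_ex m : exists y, cls m y.
Proof. by exists m; apply/pbP; rewrite subrr; apply: T0. Qed.
Definition rep m := xchoose (cls_ex m).
Lemma rep_T m : T (rep m - m).
Proof. exact/pbP/(xchooseP (cls_ex m)). Qed.
Lemma rep_eq m m' : T (m - m') -> rep m = rep m'.
Proof.
move=> h; apply: eq_xchoose => y; apply: pb_iff; split => h'.
  by have := TD h' h; rewrite addrA subrK.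
by have := TB h' h; rewrite opprB addrA subrK.
Qed.
Lemma rep_inv m m' : rep m = rep m' -> T (m - m').
Proof.
move=> e; have h1 := rep_T m; have h2 := rep_T m'; rewrite e in h1.
by have := TB h2 h1; rewrite opprB addrC addrA subrK addrC.
Qed.
Lemma rep_idem m : rep (rep m) == rep m.
Proof. by apply/eqP/rep_eq/rep_T. Qed.

Definition Q := {m : M | rep m == m}.
HB.instance Definition _ := Choice.on Q.
Definition inQ (m : M) : Q := exist _ (rep m) (rep_idem m).
Lemma inQ_eq m m' : inQ m = inQ m' <-> T (m - m').
Proof.
split => [e|h]; first by apply: rep_inv; have := congr1 val e.
by apply: val_inj => /=; apply: rep_eq.
Qed.
Lemma inQ_val (x : Q) : inQ (val x) = x.
Proof. by apply: val_inj => /=; apply/eqP; case: x. Qed.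
Lemma val_inQ m : T (val (inQ m) - m).
Proof. exact: rep_T. Qed.
Lemma inQ_cong m m' : T (m - m') -> inQ m = inQ m'.
Proof. by move=> h; apply/inQ_eq. Qed.

Definition zeroQ := inQ 0.
Definition addQ (x y : Q) := inQ (val x + val y).
Definition oppQ (x : Q) := inQ (- val x).
Definition scaleQ (a : R^c) (x : Q) := inQ (a *: val x).

Lemma inQ_addl m m' : inQ (val (inQ m) + m') = inQ (m + m').
Proof.
apply: inQ_cong; rewrite opprD addrACA subrr addr0; apply: val_inQ.
Qed.
Lemma inQ_addr m m' : inQ (m + val (inQ m')) = inQ (m + m').
Proof. by rewrite addrC inQ_addl addrC. Qed.
Lemma inQ_add m m' : inQ (val (inQ m) + val (inQ m')) = inQ (m + m').
Proof. by rewrite inQ_addl inQ_addr. Qed.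
Lemma inQ_opp m : inQ (- val (inQ m)) = inQ (- m).
Proof. by apply: inQ_cong; rewrite -opprD; apply: TN; apply: val_inQ. Qed.
Lemma inQ_scale a m : inQ (a *: val (inQ m)) = inQ (a *: m).
Proof. by apply: inQ_cong; rewrite -scalerBr; apply: TZ; apply: val_inQ. Qed.

Lemma addQA : associative addQ.
Proof.
by move=> x y z; rewrite /addQ inQ_addl inQ_addr addrA.
Qed.
Lemma addQC : commutative addQ.
Proof. by move=> x y; rewrite /addQ addrC. Qed.
Lemma add0Q : left_id zeroQ addQ.
Proof. by move=> x; rewrite /addQ /zeroQ inQ_addl add0r inQ_val. Qed.
Lemma addNQ : left_inverse zeroQ oppQ addQ.
Proof. by move=> x; rewrite /addQ /oppQ inQ_addl addNr. Qed.

HB.instance Definition _ := GRing.isZmodule.Build Q addQA addQC add0Q addNQ.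

Lemma scaleQA a b v : scaleQ a (scaleQ b v) = scaleQ (a * b) v.
Proof. by rewrite /scaleQ inQ_scale scalerA. Qed.
Lemma scale1Q : left_id 1 scaleQ.
Proof. by move=> x; rewrite /scaleQ scale1r inQ_val. Qed.
Lemma scaleQDr : right_distributive scaleQ +%R.
Proof.
move=> a x y.
change (inQ (a *: val (addQ x y)) = addQ (inQ (a *: val x)) (inQ (a *: val y))).
by rewrite /addQ inQ_scale inQ_add scalerDr.
Qed.
Lemma scaleQDl v : {morph scaleQ^~ v: a b / a + b}.
Proof.
move=> a b.
change (inQ ((a + b) *: val v) = addQ (inQ (a *: val v)) (inQ (b *: val v))).
by rewrite /addQ inQ_add scalerDl.
Qed.
HB.instance Definition _ := GRing.Zmodule_isLmodule.Build R^c Q scaleQA scale1Q scaleQDr scaleQDl.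

Lemma inQD m m' : inQ (m + m') = inQ m + inQ m'.
Proof. by change (inQ (m + m') = addQ (inQ m) (inQ m')); rewrite /addQ inQ_add. Qed.
Lemma inQZ a m : inQ (a *: m) = a *: inQ m.
Proof. by change (inQ (a *: m) = scaleQ a (inQ m)); rewrite /scaleQ inQ_scale. Qed.
Lemma inQ0 m : inQ m = 0 <-> T m.
Proof. by change (inQ m = inQ 0 <-> T m); rewrite inQ_eq subr0. Qed.

End Quot.
Section Main.
Variable R : nzRingType.
Variable M : lmodType R^c.
Variable K : M -> Prop.
Hypothesis hK : submod K.
Variable n : nat.
Variable v : 'I_n.+1 -> M.
Hypothesis hgen : forall x : M, exists c : 'I_n.+1 -> R^c, x = \sum_i c i *: v i.
Local Notation Mat := 'M[R]_n.+1.

Definition pi (j : 'I_n.+1) (X : Mat) : M := \sum_i (X i j : R^c) *: v i.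

Lemma piD j X Y : pi j (X + Y) = pi j X + pi j Y.
Proof. by rewrite /pi -big_split; apply: eq_bigr => i _; rewrite mxE scalerDl. Qed.
Lemma pi0 j : pi j 0 = 0.
Proof. by rewrite /pi big1 // => i _; rewrite mxE scale0r. Qed.
Lemma piB j X Y : pi j (X - Y) = pi j X - pi j Y.
Proof.
by rewrite /pi -sumrB; apply: eq_bigr => i _; rewrite !mxE scalerDl scaleNr.
Qed.

Lemma mul_scal (X : Mat) (a : R) i j : (X * a%:M) i j = X i j * a.
Proof.
rewrite mxE (bigD1 j) //= big1 => [|k /negbTE nk]; rewrite mxE.
  by rewrite eqxx mulr1n addr0.
by rewrite nk mulr0n mulr0.
Qed.

Lemma piZ j (X : Mat) (a : R^c) : a *: pi j X = pi j (X * (a : R)%:M).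
Proof.
rewrite /pi scaler_sumr; apply: eq_bigr => i _.
by rewrite scalerA mul_scal.
Qed.

Lemma pi_mul (A X : Mat) : pi 0 (A * X) = \sum_k (X k 0 : R^c) *: pi k A.
Proof.
rewrite /pi.
under eq_bigr do rewrite mxE scaler_suml.
rewrite exchange_big /=; apply: eq_bigr => k _.
by rewrite scaler_sumr; apply: eq_bigr => i _; rewrite scalerA.
Qed.

Lemma surj y : exists X : Mat, pi 0 X == y.
Proof.
have [c ->] := hgen y; exists (\matrix_(i, j) (c i : R)); apply/eqP.
by rewrite /pi; apply: eq_bigr => i _; rewrite mxE.
Qed.
Definition pre y := xchoose (surj y).
Lemma pre_pi y : pi 0 (pre y) = y.
Proof. exact/eqP/(xchooseP (surj y)). Qed.

Definition Sset (s : Mat) := forall j, K (pi j s).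
Definition Tset (Y : Mat) := forall s, Sset s -> Y * s = 0.
Variable e : Mat.
Hypothesis he : e * e = e.
Hypothesis hann : forall x, (forall s, Tset s -> s * x = 0) <-> exists y, x = e * y.

Local Notation f := (1 - e).
Lemma fe : f * e = 0. Proof. by rewrite mulrBl mul1r he subrr. Qed.
Lemma ff : f * f = f. Proof. by rewrite mulrBr mulr1 fe subr0. Qed.
Lemma ef1 : e + f = 1. Proof. by rewrite addrC subrK. Qed.

Lemma K0 : K 0. Proof. by case: hK. Qed.

Lemma Kfix W : K (pi 0 W) -> forall i, (f * W) i 0 = 0.
Proof.
move=> hW i; set s : Mat := \matrix_(i, j) W i 0.
have Ss : Sset s.
  move=> j; suff -> : pi j s = pi 0 W by [].
  by rewrite /pi; apply: eq_bigr => k _; rewrite mxE.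
have [y hy] : exists y, s = e * y by apply/hann => Y hY; apply: hY.
have es : e * s = s by rewrite hy mulrA he.
have fs : f * s = 0 by rewrite mulrBl mul1r es subrr.
transitivity ((f * s) i 0); last by rewrite fs mxE.
by rewrite [LHS]mxE [RHS]mxE; apply: eq_bigr => k _; congr (_ * _); rewrite /s mxE.
Qed.

Lemma mxBE (A B : Mat) i j : (A - B) i j = A i j - B i j.
Proof. by rewrite !mxE. Qed.
Lemma mxDE (A B : Mat) i j : (A + B) i j = A i j + B i j.
Proof. by rewrite !mxE. Qed.

Lemma Wlem Z1 Z2 : pi 0 Z1 = pi 0 Z2 -> forall i, (f * Z1) i 0 = (f * Z2) i 0.
Proof.
move=> h i; apply/eqP; rewrite -subr_eq0; apply/eqP.
have hK2 : K (pi 0 (Z1 - Z2)) by rewrite piB h subrr; exact: K0.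
by rewrite -mxBE -mulrBr (Kfix hK2).
Qed.

Lemma kill (phi : M -> RR R) : linear_on (@full_sub _ M) phi ->
  (forall k, K k -> phi k = 0) -> forall X, phi (pi 0 (e * X)) = 0.
Proof.
move=> hl hk X.
have phipi : forall j Y, phi (pi j Y) = \sum_i (phi (v i) : R) * Y i j.
  move=> j Y; have [_ ->] := lin_sumZ (full_sub_sub M) hl (index_enum _)
     (fun i => Y i j : R^c) (w:=v) (fun _ => I).
  by [].
set C : Mat := \matrix_(i, j) (if i == 0 then (phi (v j) : R) else 0).
have TC : Tset C.
  move=> s Ss; apply/matrixP => i j; rewrite [RHS]mxE mxE.
  under eq_bigr => k _ do rewrite /C mxE.
  case: (i == 0).
    by rewrite -[RHS](hk _ (Ss j)) phipi.
  by rewrite big1 // => k _; rewrite mul0r.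
have Ce : C * e = 0.
  have : exists y, e = e * y by exists 1; rewrite mulr1.
  by move/hann => /(_ C TC).
have := congr1 (fun A : Mat => A 0 0) (congr1 (fun A => A * X) Ce).
rewrite -mulrA mul0r [in X in _ = X -> _]mxE => <-.
by rewrite phipi mxE; apply: eq_bigr => k _; congr (_ * _); rewrite /C mxE eqxx.
Qed.


Definition cf y i : R := (f * pre y) i 0.
Definition pp y := pi 0 (f * pre y).
Definition ep y := pi 0 (e * pre y).
Definition Dp y := exists X, y = pi 0 (e * X).
Definition Pp y := exists X, y = pi 0 (f * X).

Lemma pp_cf y : pp y = \sum_i (cf y i : R^c) *: v i.
Proof. by []. Qed.

Lemma decomp y : y = ep y + pp y.
Proof. by rewrite /ep /pp -piD -mulrDl ef1 mul1r pre_pi. Qed.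

Lemma cfD x y i : cf (x + y) i = cf x i + cf y i.
Proof.
rewrite /cf (Wlem (Z2 := pre x + pre y)) ?mulrDr ?mxDE //.
by rewrite piD !pre_pi.
Qed.

Lemma cfZ (a : R^c) y i : cf (a *: y) i = cf y i * (a : R).
Proof.
rewrite /cf (Wlem (Z2 := pre y * (a : R)%:M)); first by rewrite mulrA mul_scal.
by rewrite -piZ !pre_pi.
Qed.

Lemma cfK y i : K y -> cf y i = 0.
Proof. by move=> hy; apply: Kfix; rewrite pre_pi. Qed.

Lemma cfD0 y i : Dp y -> cf y i = 0.
Proof.
case=> X hy; rewrite /cf (Wlem (Z2 := e * X)); last by rewrite pre_pi.
by rewrite mulrA fe mul0r mxE.
Qed.

Lemma pp0 y : (forall i, cf y i = 0) -> pp y = 0.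
Proof. by move=> h; rewrite pp_cf big1 // => i _; rewrite h scale0r. Qed.

Lemma ep_id y : (forall i, cf y i = 0) -> ep y = y.
Proof. by move=> h; rewrite [RHS]decomp pp0 // addr0. Qed.

Lemma Dp_ep y : Dp (ep y). Proof. by exists (pre y). Qed.
Lemma Pp_pp y : Pp (pp y). Proof. by exists (pre y). Qed.

Lemma Dp_cf y : (forall i, cf y i = 0) -> Dp y.
Proof. by move=> h; rewrite -(ep_id h); apply: Dp_ep. Qed.

Lemma cfP y : Pp y -> pp y = y.
Proof.
case=> X ->; rewrite /pp /pi; apply: eq_bigr => i _.
by rewrite (Wlem (Z2 := f * X)) ?pre_pi // mulrA ff.
Qed.

Lemma ppD x y : pp (x + y) = pp x + pp y.
Proof.
by rewrite !pp_cf -big_split; apply: eq_bigr => i _; rewrite cfD scalerDl.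
Qed.
Lemma ppZ a y : pp (a *: y) = a *: pp y.
Proof.
rewrite !pp_cf scaler_sumr; apply: eq_bigr => i _.
by rewrite cfZ scalerA.
Qed.
Lemma ep_pp y : ep y = y - pp y.
Proof. by apply/eqP; rewrite eq_sym subr_eq -decomp. Qed.
Lemma epD x y : ep (x + y) = ep x + ep y.
Proof. by rewrite !ep_pp ppD opprD addrACA. Qed.
Lemma epZ a y : ep (a *: y) = a *: ep y.
Proof. by rewrite !ep_pp ppZ scalerBr. Qed.

Lemma Dp_sub : submod Dp.
Proof.
split; first by exists 0; rewrite mulr0 pi0.
  by move=> x y [X ->] [Y ->]; exists (X + Y); rewrite mulrDr piD.
by move=> a x [X ->]; exists (X * (a : R)%:M); rewrite mulrA -piZ.
Qed.
Lemma Pp_sub : submod Pp.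
Proof.
split; first by exists 0; rewrite mulr0 pi0.
  by move=> x y [X ->] [Y ->]; exists (X + Y); rewrite mulrDr piD.
by move=> a x [X ->]; exists (X * (a : R)%:M); rewrite mulrA -piZ.
Qed.

Lemma K_Dp k : K k -> Dp k.
Proof. by move=> hk; apply: Dp_cf => i; apply: cfK. Qed.

Lemma Bcl_Dp y : Bcl K y -> Dp y.
Proof.
case=> X [sX KX Xy bX]; apply: Dp_cf => i.
pose psi := fun z => (cf z i : RR R).
have : hom_sq K X psi.
  split; last by move=> k hk; rewrite /psi cfK.
  by split => [x1 y1 _ _|a x1 _]; rewrite /psi ?cfD ?cfZ.
by move/bX => /(_ y Xy).
Qed.

Lemma Dp_Bcl y : Dp y -> Bcl K y.
Proof.
move=> Dy; exists Dp; split => //; first exact: Dp_sub.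
  exact: K_Dp.
move=> g [[gD gZ] gK] x Dx.
pose h := fun z => g (ep z).
have hl : linear_on (@full_sub _ M) h.
  split => [x1 y1 _ _|a x1 _]; rewrite /h ?epD ?epZ.
    by rewrite gD //; apply: Dp_ep.
  by rewrite gZ //; apply: Dp_ep.
have hk : forall k, K k -> h k = 0.
  by move=> k hk; rewrite /h ep_id ?gK // => i; apply: cfK.
case: (Dx) => X hx.
have := kill hl hk X; rewrite -hx /h ep_id //.
by move=> i; apply: cfD0.
Qed.

Lemma Bcl_iff y : Bcl K y <-> Dp y.
Proof. by split; [apply: Bcl_Dp | apply: Dp_Bcl]. Qed.

Lemma dsum_DP : dsum Dp Pp.
Proof.
split; [exact: Dp_sub | exact: Pp_sub | | ].
  by move=> x Dx Px; rewrite -(cfP Px) pp0 // => i; apply: cfD0.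
by move=> m; exists (ep m), (pp m); split; [apply: Dp_ep | apply: Pp_pp | apply: decomp].
Qed.


Definition u k := pi k f.

Lemma Pp_u k : Pp (u k).
Proof.
exists (delta_mx k 0); rewrite pi_mul (bigD1 k) //= big1 => [|j /negbTE nj].
  by rewrite mxE !eqxx /= scale1r addr0.
by rewrite mxE nj /= scale0r.
Qed.

Lemma pp_u y : pp y = \sum_k (cf y k : R^c) *: u k.
Proof. by rewrite /pp -{1}ff -mulrA pi_mul. Qed.

Lemma proj_gen (A B : lmodType R^c) (g : A -> B) (X : M -> Prop) (phi : M -> B) :
  linear_on (@full_sub _ A) g -> (forall b, exists a, g a = b) ->
  submod X -> linear_on X phi -> (forall k, X (u k)) ->
  exists h : M -> A, [/\ linear_on (@full_sub _ M) h, (forall y, Dp y -> h y = 0)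
     & forall y, g (h y) = phi (pp y)].
Proof.
move=> hg hs hX hl hu.
have ex : forall k, exists a, g a == phi (u k).
  by move=> k; have [a ha] := hs (phi (u k)); exists a; apply/eqP.
pose a k := xchoose (ex k).
have ga k : g (a k) = phi (u k) by apply/eqP/(xchooseP (ex k)).
exists (fun y => \sum_k (cf y k : R^c) *: a k); split.
- split => [x y _ _|c x _].
    by rewrite -big_split; apply: eq_bigr => k _; rewrite cfD scalerDl.
  by rewrite scaler_sumr; apply: eq_bigr => k _; rewrite cfZ scalerA.
- by move=> y Dy; rewrite big1 // => k _; rewrite cfD0 // scale0r.
move=> y; rewrite pp_u.
have [_ ->] := lin_sumZ (full_sub_sub A) hg (index_enum _) (fun k => cf y k : R^c) (w:=a) (fun _ => I).
have [_ ->] := lin_sumZ hX hl (index_enum _) (fun k => cf y k : R^c) (w:=u) hu.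
by apply: eq_bigr => k _; rewrite ga.
Qed.

Lemma proj_Bcl : proj_sq (Bcl K) (@full_sub _ M).
Proof.
move=> A B g hg hs phi [hl hk].
have [h [hhl hhD hgh]] := proj_gen hg hs (full_sub_sub M) hl (fun _ => I).
exists h; split.
  by split => // y hy; apply: hhD; apply/Bcl_iff.
move=> y _; rewrite hgh {2}(decomp y).
case: hl => hD _; rewrite hD // (hk (ep y)) ?add0r //.
by apply/Bcl_iff; apply: Dp_ep.
Qed.

Lemma proj_P : proj_sq (@zero_sub _ M) Pp.
Proof.
move=> A B g hg hs phi [hl hk].
have [h [hhl hhD hgh]] := proj_gen hg hs Pp_sub hl Pp_u.
exists h; split.
  split; first by case: hhl => h1 h2; split => *; [apply: h1 | apply: h2].
  by move=> y ->; apply: hhD; case: Dp_sub.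
by move=> y Py; rewrite hgh cfP.
Qed.

Lemma fg_P : fg_sq (@zero_sub _ M) Pp.
Proof.
exists n.+1, u; split; first exact: Pp_u.
by move=> y Py; exists (cf y); rewrite /zero_sub -pp_u cfP // subrr.
Qed.

Lemma fg_Bcl : fg_sq (Bcl K) (@full_sub _ M).
Proof.
exists n.+1, v; split => // x _.
have [c hc] := hgen x; exists c; rewrite -hc subrr.
by apply/Bcl_iff; case: Dp_sub.
Qed.

Lemma part1 : fg_sq (Bcl K) (@full_sub _ M) /\ proj_sq (Bcl K) (@full_sub _ M) /\
    summand (Bcl K) /\ dsum (Bcl K) Pp /\ fg_sq (@zero_sub _ M) Pp /\ proj_sq (@zero_sub _ M) Pp.
Proof.
have ds : dsum (Bcl K) Pp.
  have [[D0 DD DZ] sP cap sum] := dsum_DP.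
  split => //.
  - split; first by apply/Bcl_iff.
      by move=> x y /Bcl_iff hx /Bcl_iff hy; apply/Bcl_iff; apply: DD.
    by move=> a x /Bcl_iff hx; apply/Bcl_iff; apply: DZ.
  - by move=> x /Bcl_iff; apply: cap.
  - by move=> m; have [x [y [hx hy ->]]] := sum m; exists x, y; split => //; apply/Bcl_iff.
split; first exact: fg_Bcl.
split; first exact: proj_Bcl.
split; first by exists Pp.
by split => //; split; [exact: fg_P | exact: proj_P].
Qed.


Hypothesis hNS : right_nonsingular R.
Hypothesis hSS : forall N : lmodType R^c, fg_mod N -> nonsingular_mod N -> projective_mod N.

Lemma Tcl_sub : submod (Tcl K).
Proof. exact: (Qe_sub (Qe_sub hK)). Qed.

Lemma K_Tcl k : K k -> Tcl K k.
Proof. by move=> hk; apply: (Qe_incl (Qe_sub hK)); apply: (Qe_incl hK). Qed.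

Lemma cf_lin i : linear_on (@full_sub _ M) (fun z => (cf z i : RR R)).
Proof. by split => [x1 y1 _ _|a x1 _]; rewrite ?cfD ?cfZ. Qed.

Lemma Tcl_Dp y : Tcl K y -> Dp y.
Proof.
move=> hy; apply: Dp_cf => i.
apply: (Qe_kill hNS (cf_lin i) _ hy).
apply: (Qe_kill hNS (cf_lin i)) => z hz.
by apply: cfK.
Qed.

Local Notation Qm := (Q Tcl_sub).
Local Notation iQ := (inQ Tcl_sub).

Lemma iQ_lin : linear_on (@full_sub _ M) iQ.
Proof. by split => [x1 y1 _ _|a x1 _]; rewrite ?inQD ?inQZ. Qed.

Lemma iQ_gen (q : Qm) : exists c : 'I_n.+1 -> R^c, q = \sum_i c i *: iQ (v i).
Proof.
have [c hc] := hgen (val q); exists c.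
have [_ <-] := lin_sumZ (full_sub_sub M) iQ_lin (index_enum _) c (w:=v) (fun _ => I).
by rewrite -hc inQ_val.
Qed.

Lemma fgQ : fg_mod Qm.
Proof.
exists n.+1, (fun i => iQ (v i)); split => // q _.
by have [c hc] := iQ_gen q; exists c; rewrite /zero_sub -hc subrr.
Qed.

Lemma nsQ : nonsingular_mod Qm.
Proof.
move=> q [I [eI h]]; rewrite -(inQ_val q); apply/inQ0.
apply: (Qe_closed hNS (Qe_sub hK) eI) => a Ia.
have := h a Ia; rewrite /zero_sub -{1}(inQ_val q) -inQZ.
by move/inQ0.
Qed.

Lemma Dp_Tcl y : Dp y -> Tcl K y.
Proof.
move=> Dy; case: (Classical_Prop.classic (Tcl K y)) => // nT; exfalso.
have pQ := hSS fgQ nsQ.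
pose A : lmodType R^c := 'rV[R^c]_n.+1.
pose g := fun w : A => \sum_i (w 0 i : R^c) *: iQ (v i).
have hg : linear_on (@full_sub _ A) g.
  split => [x1 y1 _ _|a x1 _]; rewrite /g.
    by rewrite -big_split; apply: eq_bigr => i _; rewrite mxE scalerDl.
  by rewrite scaler_sumr; apply: eq_bigr => i _; rewrite mxE scalerA.
have hs : forall b, exists a, g a = b.
  move=> b; have [c ->] := iQ_gen b; exists (\row_i c i).
  by rewrite /g; apply: eq_bigr => i _; rewrite mxE.
have hid : hom_sq (@zero_sub _ Qm) (@full_sub _ Qm) id.
  by split => //; split.
have [hq [[[hqD hqZ] hq0] hgq]] := pQ A Qm g hg hs id hid.
have nq : iQ y <> 0 by move/inQ0/nT.
have g0 : g 0 = 0 by rewrite /g big1 // => i _; rewrite mxE scale0r.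
have nhq : hq (iQ y) <> 0.
  by move=> h; apply: nq; rewrite -(hgq (iQ y) I) h g0.
case: (boolP [exists i, hq (iQ y) 0 i != 0]) => [/existsP [i hi] | /existsPn hall]; last first.
  apply: nhq; apply/matrixP => a b; rewrite (ord1 a) [RHS]mxE; apply/eqP.
  by move: (hall b); rewrite negbK.
pose phi := fun z => (hq (iQ z) 0 i : RR R).
have hl : linear_on (@full_sub _ M) phi.
  split => [x1 y1 _ _|a x1 _]; rewrite /phi.
    by rewrite inQD hqD // mxE.
  by rewrite inQZ hqZ // mxE.
have hk : forall k, K k -> phi k = 0.
  move=> k hk; rewrite /phi.
  have -> : iQ k = 0 by apply/inQ0; apply: K_Tcl.
  by rewrite hq0 // mxE.
case: Dy => X hX.
have := kill hl hk X; rewrite -hX /phi => h0.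
by move: hi; rewrite h0 eqxx.
Qed.

Lemma Tcl_Bcl y : Tcl K y <-> Bcl K y.
Proof.
split => h; first by apply/Bcl_iff; apply: Tcl_Dp.
by apply: Dp_Tcl; apply/Bcl_iff.
Qed.

End Main.

Lemma pad (R : nzRingType) (M : lmodType R^c) : fg_mod M ->
  exists n (v : 'I_n.+1 -> M), forall x, exists c : 'I_n.+1 -> R^c, x = \sum_i c i *: v i.
Proof.
move=> [n0 [v0 [_ hg]]].
exists n0, (fun i => if unlift ord_max i is Some j then v0 j else 0) => x.
have [c hc] := hg x I; rewrite /zero_sub in hc.
exists (fun i => if unlift ord_max i is Some j then c j else 0).
rewrite (bigD1_ord ord_max) //= unlift_none scale0r add0r.
apply/eqP; rewrite -subr_eq0; apply/eqP; rewrite -[RHS]hc; congr (_ - _).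
by apply: eq_bigr => j _; rewrite liftK.
Qed.

Lemma main1 (R : nzRingType) (hbaer : forall n : nat, baer 'M[R]_n.+1)
  (M : lmodType R^c) (hM : fg_mod M) (K : M -> Prop) (hK : submod K) :
  fg_sq (Bcl K) (@full_sub _ M) /\ proj_sq (Bcl K) (@full_sub _ M) /\
  exists P, [/\ dsum (Bcl K) P, fg_sq (@zero_sub _ M) P & proj_sq (@zero_sub _ M) P].
Proof.
have [n [v hgen]] := pad hM.
have [e [he hann]] := hbaer n (Tset K v).
have [h1 [h2 [_ [h4 [h5 h6]]]]] := part1 hK hgen he hann.
by split => //; split => //; exists (Pp v e).
Qed.

Lemma main2 (R : nzRingType) (hbaer : forall n : nat, baer 'M[R]_n.+1)
  (hSS : right_strongly_semihereditary R)
  (M : lmodType R^c) (hM : fg_mod M) (K : M -> Prop) (hK : submod K) :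
  forall x, Tcl K x <-> Bcl K x.
Proof.
have [n [v hgen]] := pad hM.
have [e [he hann]] := hbaer n (Tset K v).
case: hSS => hNS hS.
exact: (Tcl_Bcl hK hgen he hann hNS hS).
Qed.

Lemma dsum_sym (R : nzRingType) (M : lmodType R^c) (X Y : M -> Prop) :
  dsum X Y -> dsum Y X.
Proof.
move=> [sX sY cap sum]; split => //; first by move=> x hy hx; apply: cap.
by move=> m; have [x [y [hx hy ->]]] := sum m; exists y, x; split => //; rewrite addrC.
Qed.

Theorem mainTheorem4 (R : nzRingType)
  (hsh : right_semihereditary R)
  (hbaer : forall n : nat, baer 'M[R]_n.+1)
  (M : lmodType R^c) (hM : fg_mod M)
  (K : M -> Prop) (hK : submod K) :
  (* (1) *)
  ( fg_sq (Bcl K) (@full_sub _ M) /\ proj_sq (Bcl K) (@full_sub _ M) /\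
    summand (Bcl K) /\
    exists U : M -> Prop, [/\ dsum (Bcl (@zero_sub _ M)) U,
                             fg_sq (@zero_sub _ M) U & proj_sq (@zero_sub _ M) U] )
  /\
  (* (2) *)
  ( right_strongly_semihereditary R ->
    (forall x, Tcl K x <-> Bcl K x) /\ summand (Tcl K) /\
    (forall N : lmodType R^c, fg_mod N ->
       (bounded_mod N <-> Gtorsion_mod N) /\
       (Btorsionfree_mod N <-> Gtorsionfree_mod N)) /\
    exists P S : M -> Prop, [/\ dsum P S, fg_sq (@zero_sub _ M) P,
                              proj_sq (@zero_sub _ M) P & singular_sub S] ).
Proof.
have [h1 [h2 [P [hP1 hP2 hP3]]]] := main1 hbaer hM hK.
have [_ [_ [U [hU1 hU2 hU3]]]] := main1 hbaer hM (zero_sub_sub M).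
split.
  by split => //; split => //; split; [exists P | exists U].
move=> hSS.
have eq1 := main2 hbaer hSS hM hK.
split => //.
split.
  have -> : Tcl K = Bcl K.
    by apply: functional_extensionality => x;
       apply: propositional_extensionality.
  by exists P.
split.
  move=> N hN; have eqN := main2 hbaer hSS hN (zero_sub_sub N).
  split; last by split => h x hx; apply: h; apply/eqN.
  split => h.
    move=> x; apply/eqN; exists (@full_sub _ N); split => //.
  move=> f [[fD fZ] f0] x _.
  have [X [sX _ Xx bX]] := (eqN x).1 (h x).
  by apply: (bX f) => //; split => //; split => *; [apply: fD | apply: fZ].
exists U, (Bcl (@zero_sub _ M)); split; [exact: (dsum_sym hU1) | exact: hU2 | exact: hU3 | ].
move=> x hx; have [hNS _] := hSS.
by apply: (Z2_sing hNS); apply/(main2 hbaer hSS hM (zero_sub_sub M)).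
Qed.
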